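(* Let $r$ and $k$ be positive integers and $x\ge1$, $y$ real. Define $$R(r,k,x)=\sum_{\substack{y<r<q_1<\cdots<q_k\le x\\ r\mid q_1-1,\ q_1\mid q_2-1,\ \dots,\ q_{k-1}\mid q_k-1}}\frac{1}{q_k},$$ where $q_1,\dots,q_k$ range over primes. Then $R(r,k,x)\le\frac{(\log x+1)^k}{r}$. Consequently, $$S(r,k,x):=\sum_{\substack{y<r<q_1<\cdots<q_k\le n\le x\\ r\mid q_1-1,\ q_1\mid q_2-1,\ \dots,\ q_{k-1}\mid q_k-1,\ q_k\mid n}}1\ \le\ \frac{x(\log x+1)^k}{r},$$ where $q_1,\dots,q_k$ range over primes and $n$ over positive integers. *)

(* Defs.v *)
From HB Require Import structures.
From mathcomp Require Import all_boot all_order all_algebra.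
From mathcomp Require Import all_classical all_reals all_analysis.
Set Implicit Arguments. Unset Strict Implicit. Unset Printing Implicit Defensive.
Import Order.TTheory GRing.Theory Num.Theory.
Local Open Scope ring_scope.

Definition qseq (k M : nat) (q : {ffun 'I_k -> 'I_M}) : seq nat :=
  [seq val (q i) | i <- enum 'I_k].

Definition good_chain (R : realType) (y : R) (r k : nat) (x : R) (M : nat)
    (q : {ffun 'I_k -> 'I_M}) : bool :=
  let s := qseq q in
  [&& y < r%:R,
      sorted ltn (r :: s)%N,
      all prime s,
      all (fun p : nat => p%:R <= x) s &
      path (fun a b : nat => (a %| b - 1)%N) r s].

(* Bound for the ranges: every integer m with m <= x satisfies m < truncn x + 1. *)
Definition bnd (R : realType) (x : R) : nat := (Num.truncn x).+1.

Definition qlast (k M : nat) (r : nat) (q : {ffun 'I_k -> 'I_M}) : nat :=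
  last r (qseq q).

Definition Rsum (R : realType) (y : R) (r k : nat) (x : R) : R :=
  \sum_(q : {ffun 'I_k -> 'I_(bnd x)} | good_chain y r x q)
     ((qlast r q)%:R)^-1.

Definition Ssum (R : realType) (y : R) (r k : nat) (x : R) : R :=
  \sum_(q : {ffun 'I_k -> 'I_(bnd x)} | good_chain y r x q)
    \sum_(n < bnd x | [&& (0 < val n)%N, (qlast r q <= val n)%N, (val n)%:R <= x
                         & (qlast r q %| val n)%N]) 1.

(* Main.v *)
Require Import Defs.
From HB Require Import structures.
From mathcomp Require Import all_boot all_order all_algebra.
From mathcomp Require Import all_classical all_reals all_analysis.
From mathcomp Require Import ring lra zify.
Import Order.TTheory GRing.Theory Num.Theory.
Local Open Scope ring_scope.

Lemma inj_sum_le (R : numDomainType) (I J : finType) (h : I -> J) (P : pred I) (Q : pred J)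
  (g : J -> R) : (forall j, Q j -> 0 <= g j) -> {in P &, injective h} ->
  (forall i, P i -> Q (h i)) ->
  \sum_(i | P i) g (h i) <= \sum_(j | Q j) g j.
Proof.
move=> g0 hinj PQ.
have -> : \sum_(i | P i) g (h i) = \sum_(j in h @: [set i | P i]) g j.
  rewrite big_imset /=; last by move=> a b; rewrite !inE; exact: hinj.
  by apply: eq_bigl => i; rewrite inE.
rewrite [X in _ <= X](bigID (fun j => j \in h @: [set i | P i])) /=.
rewrite -[X in X <= _]addr0 lerD //; last by apply: sumr_ge0 => j /andP[/g0].
rewrite [X in _ <= X]big_mkcond /= [X in X <= _]big_mkcond /=.
apply: ler_sum => j _; case: ifP => jin; last by rewrite andbF.
case/imsetP: jin => i; rewrite inE => Pi ->.
by rewrite PQ // imset_f // inE.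
Qed.

Lemma harm (R : realType) (N : nat) : (0 < N)%N ->
  \sum_(m < N.+1 | (0 < m)%N) ((m%:R : R)^-1) <= 1 + ln N%:R.
Proof.
elim: N => // N IH _.
rewrite big_mkcond big_ord_recr /= -big_mkcond /=.
case: N IH => [|N] IH.
  by rewrite big_mkcond big_ord_recr /= big_ord0 /= ln1 !add0r addr0 invr1.
have := IH isT => {}IH.
apply: le_trans (lerD IH (lexx _)) _.
rewrite -addrA lerD2l.
have h1 : ln (N.+1%:R : R) = ln (N.+2%:R) + ln (N.+1%:R / N.+2%:R).
  by rewrite ln_div ?posrE ?ltr0n // addrC subrK.
rewrite h1 -lerBrDl opprD addrA subrr add0r -lerNr.
have -> : (N.+1%:R / N.+2%:R : R) = 1 + (- (N.+2%:R)^-1).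
  field; have := ler0n R N; move=> ?; rewrite gt_eqF //; lra.
apply: (@le_ln1Dx R (- (N.+2%:R)^-1)).
rewrite ltrNl opprK invf_lt1 ?ltr0n // ltr1n //.
Qed.

Lemma count_le {R : realType} (x : R) (Q N : nat) : 0 <= x -> (0 < Q)%N ->
  (\sum_(j < N | (0 < (j:nat))%N && (((j * Q)%N)%:R <= x)) (1:R)) * Q%:R <= x /\
  \sum_(j < N | (0 < (j:nat))%N && (((j * Q)%N)%:R <= x)) (1:R) <= (N.-1)%:R.
Proof.
move=> x0 Q0; elim: N => [|N [IH1 IH2]].
  by rewrite big_ord0 mul0r; split.
rewrite big_mkcond big_ord_recr /= -big_mkcond.
case: ifP => [/andP[N0 NQ]|_]; last first.
  rewrite addr0; split => //; apply: le_trans IH2 _; rewrite ler_nat; lia.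
set T := \sum_(_ < _ | _) _ in IH1 IH2 *.
have TN : T + 1 <= N%:R.
  by apply: le_trans (lerD IH2 (lexx 1)) _; rewrite natr1 prednK.
split => //.
by apply: le_trans (ler_wpM2r (ler0n _ _) TN) _; rewrite -natrM.
Qed.

Definition C {R : realType} (x : R) (r : nat) (s : seq nat) : bool :=
  [&& sorted ltn (r :: s), all (fun p : nat => p%:R <= x) s &
      path (fun a b : nat => (a %| b - 1)%N) r s].

Definition F {R : realType} (x : R) (r k : nat) : R :=
  \sum_(q : {ffun 'I_k -> 'I_(bnd x)} | C x r (qseq q)) ((last r (qseq q))%:R)^-1.

Definition fcons {k M} (a : 'I_M) (g : {ffun 'I_k -> 'I_M}) : {ffun 'I_k.+1 -> 'I_M} :=
  [ffun i => if unlift ord0 i is Some j then g j else a].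

Lemma qseq_fcons k M (a : 'I_M) (g : {ffun 'I_k -> 'I_M}) :
  qseq (fcons a g) = val a :: qseq g.
Proof.
rewrite /qseq enum_ordSl /= ffunE unlift_none -map_comp; congr (_ :: _).
by apply: eq_map => j /=; rewrite ffunE liftK.
Qed.

Lemma C_cons {R : realType} (x : R) r a s :
  C x r (a :: s) = [&& (r < a)%N, a%:R <= x, (r %| a - 1)%N & C x a s].
Proof.
rewrite /C /=.
by case: (r < a)%N; case: (a%:R <= x); case: (r %| a - 1)%N; rewrite ?andbF.
Qed.

Lemma harm_bound (R : realType) (x : R) (r : nat) : 1 <= x -> (0 < r)%N ->
  \sum_(a : 'I_(bnd x) | [&& (r < a)%N, (a:nat)%:R <= x & (r %| a - 1)%N]) ((a:nat)%:R)^-1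
   <= (ln x + 1) / r%:R.
Proof.
move=> x1 r0.
have x0 : 0 <= x by apply: le_trans x1.
have tx : (0 < Num.truncn x)%N by rewrite truncn_gt0.
pose h := fun a : 'I_(bnd x) => (inord ((a - 1) %/ r) : 'I_(bnd x)).
have hv : forall a : 'I_(bnd x), nat_of_ord (h a) = ((a - 1) %/ r)%N.
  move=> a; rewrite /h inordK //; have := ltn_ord a; rewrite /bnd.
  move=> aM; apply: leq_ltn_trans (leq_div _ _) _; lia.
apply: le_trans (_ : \sum_(a : 'I_(bnd x) | [&& (r < a)%N, (a:nat)%:R <= x & (r %| a - 1)%N])
   r%:R^-1 * ((h a : nat)%:R)^-1 <= _).
  apply: ler_sum => a /and3P[h1 h2 h3].
  rewrite hv -invfM -natrM.
  have -> : (r * ((a - 1) %/ r))%N = (a - 1)%N by rewrite mulnC divnK.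
  rewrite lef_pV2 ?posrE ?ltr0n ?ler_nat; lia.
rewrite -mulr_sumr mulrC ler_wpM2r ?invr_ge0 ?ler0n //.
apply: le_trans (@inj_sum_le _ _ _ h _ (fun m : 'I_(bnd x) => (0 < (m:nat))%N)
   (fun m : 'I_(bnd x) => ((m:nat)%:R)^-1) _ _ _) _.
- by move=> j _; rewrite invr_ge0 ler0n.
- move=> a b /and3P[a1 _ a3] /and3P[b1 _ b3] /(congr1 (@nat_of_ord _)); rewrite !hv => e.
  apply: val_inj => /=.
  have : ((a - 1) %/ r * r)%N = ((b - 1) %/ r * r)%N by rewrite e.
  rewrite !divnK //; lia.
- move=> a /and3P[a1 _ a3]; rewrite hv divn_gt0 //; lia.
apply: le_trans (harm _ _ tx) _.
rewrite addrC lerD2r ler_ln ?posrE ?ltr0n ?truncn_le //.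
by apply: lt_le_trans x1.
Qed.

Lemma Fbound {R : realType} (x : R) (k : nat) : 1 <= x ->
  forall r, (0 < r)%N -> F x r k <= (ln x + 1) ^+ k / r%:R.
Proof.
move=> x1.
have L0 : 0 <= ln x + 1 by rewrite addr_ge0 ?ln_ge0.
elim: k => [|k IH] r r0.
  rewrite /F.
  have qs : forall q : {ffun 'I_0 -> 'I_(bnd x)}, qseq q = [::].
    by move=> q; rewrite /qseq enum_ord0.
  under eq_bigl => q do rewrite qs.
  under eq_bigr => q _ do rewrite qs.
  rewrite /= sumr_const card_ffun card_ord [#|_|]card_ord expn0 expr0 mul1r.
  done.
rewrite /F (reindex (fun p : 'I_(bnd x) * {ffun 'I_k -> 'I_(bnd x)} => fcons p.1 p.2)) /=;
  last first.
  exists (fun q => (q ord0, [ffun j => q (lift ord0 j)])).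
    case=> a g _ /=; congr (_, _); first by rewrite ffunE unlift_none.
    by apply/ffunP => j; rewrite !ffunE liftK.
  move=> q _; apply/ffunP => i; rewrite ffunE.
  by case: unliftP => [j ->|->] //; rewrite ffunE.
under eq_bigl => p do rewrite qseq_fcons C_cons.
under eq_bigr => p _ do rewrite qseq_fcons /=.
have -> : \sum_(p : 'I_(bnd x) * {ffun 'I_k -> 'I_(bnd x)} |
      [&& (r < p.1)%N, (p.1 : nat)%:R <= x, (r %| p.1 - 1)%N & C x p.1 (qseq p.2)])
      ((last (p.1 : nat) (qseq p.2))%:R)^-1 =
    \sum_(a : 'I_(bnd x)) \sum_(g : {ffun 'I_k -> 'I_(bnd x)} |
      [&& (r < a)%N, (a : nat)%:R <= x, (r %| a - 1)%N & C x a (qseq g)])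
      ((last (a : nat) (qseq g))%:R)^-1.
  symmetry; under eq_bigr => a _ do rewrite big_mkcond.
  by rewrite pair_big /= [RHS]big_mkcond; apply: eq_bigr => -[a g] _.
apply: le_trans (_ : \sum_(a : 'I_(bnd x) | [&& (r < a)%N, (a:nat)%:R <= x & (r %| a - 1)%N])
   (ln x + 1) ^+ k / (a : nat)%:R <= _).
  rewrite [X in _ <= X]big_mkcond /=; apply: ler_sum => a _.
  case: ifP => Da.
    case/and3P: Da => h1 h2 h3; rewrite h1 h2 h3 /=.
    by apply: IH; apply: leq_ltn_trans h1.
  rewrite big_pred0 // => g; apply/negbTE; apply: contraFN Da.
  by case/and4P => -> -> -> _.
rewrite -mulr_sumr exprSr -mulrA ler_wpM2l ?exprn_ge0 //.
exact: harm_bound.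
Qed.

Lemma sorted_last_ge r s : sorted ltn (r :: s) -> (r <= last r s)%N.
Proof.
elim: s r => [|a s IH] r //= /andP[ra Hs].
exact: leq_trans (ltnW ra) (IH a Hs).
Qed.

Theorem lemma4p2 (R : realType) (r k : nat) (x y : R) :
  (0 < r)%N -> (0 < k)%N -> 1 <= x ->
  Rsum y r k x <= (ln x + 1) ^+ k / r%:R /\
  Ssum y r k x <= x * (ln x + 1) ^+ k / r%:R.
Proof.
move=> r0 k0 x1.
have x0 : 0 <= x by apply: le_trans x1.
have RF : Rsum y r k x <= F x r k.
  rewrite /Rsum /F /qlast [X in X <= _]big_mkcond [X in _ <= X]big_mkcond.
  apply: ler_sum => q _; rewrite /good_chain /C /=.
  case: ifP => [/and5P[_ -> _ -> ->] //| _].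
  by case: ifP => // _; rewrite invr_ge0 ler0n.
have RB := le_trans RF (@Fbound R x k x1 r r0).
split => //.
apply: le_trans (_ : \sum_(q : {ffun 'I_k -> 'I_(bnd x)} | good_chain y r x q)
   x * ((qlast r q)%:R)^-1 <= _); last first.
  by rewrite -mulr_sumr -mulrA ler_wpM2l.
apply: ler_sum => q /and5P[_ hs _ _ _].
have Q0 : (0 < qlast r q)%N by apply: leq_trans r0 (sorted_last_ge _ _ hs).
set Q := qlast r q in Q0 *.
pose h := fun n : 'I_(bnd x) => (inord (n %/ Q) : 'I_(bnd x)).
have hv : forall n : 'I_(bnd x), nat_of_ord (h n) = (n %/ Q)%N.
  move=> n; rewrite /h inordK //; apply: leq_ltn_trans (leq_div _ _) (ltn_ord n).
apply: le_trans (@inj_sum_le _ _ _ h _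
   (fun j : 'I_(bnd x) => (0 < (j:nat))%N && ((((j:nat) * Q)%N)%:R <= x))
   (fun _ => (1:R)) _ _ _) _.
- by [].
- move=> a b /and4P[_ _ _ a3] /and4P[_ _ _ b3] /(congr1 (@nat_of_ord _)); rewrite !hv => e.
  apply: val_inj => /=.
  by rewrite -(divnK a3) -(divnK b3) e.
- move=> a /and4P[a1 a2 a3 a4]; rewrite hv divn_gt0 // a2 divnK //.
have [C1 _] := count_le x Q (bnd x) x0 Q0.
by rewrite ler_pdivlMr ?ltr0n.
Qed.
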